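(* Let $A,B,E$ be finite-dimensional, $U:\mathcal{H}_A\to\mathcal{H}_B\otimes\mathcal{H}_E$ an isometry and $V:\mathcal{H}_A\to\mathcal{H}_B\otimes\mathcal{H}_E$ a linear operator, with $\mathcal{U}(X)=UXU^\dagger$, $\mathcal{V}(X)=VXV^\dagger$. For every $n\ge1$, the sets $\mathsf{A}_n$ and $\mathsf{B}_n$ defined in the context are convex.
   Context: Let $A_i\cong A$, $B_i\cong B$, $E_i\cong E$ for $i=1,\dots,n$, let $R_0,E_0$ be trivial (one-dimensional) and $R_1,\dots,R_n$ finite-dimensional systems of arbitrary dimension. For quantum channels (CPTP maps) $\mathcal{P}^i$ from $R_{i-1}E_{i-1}$ to $A_iR_i$, set $\rho[\{\mathcal{P}^i\}_{i=1}^n]=\operatorname{tr}_{R_nE_n}\,\mathcal{U}_{A_n\to B_nE_n}\circ\mathcal{P}^n\circ\cdots\circ\mathcal{U}_{A_1\to B_1E_1}\circ\mathcal{P}^1$ (applied to the trivial input $1$), an operator on $B_1\cdots B_n$; similarly $\sigma[\{\mathcal{Q}^i\}_{i=1}^n]=\operatorname{tr}_{R_nE_n}\,\mathcal{V}\circ\mathcal{Q}^n\circ\cdots\circ\mathcal{V}\circ\mathcal{Q}^1$ for quantum channels $\mathcal{Q}^i$ from $R_{i-1}E_{i-1}$ to $A_iR_i$. $\mathsf{A}_n$ is the set of all $\rho[\{\mathcal{P}^i\}]$ and $\mathsf{B}_n$ the set of all $\sigma[\{\mathcal{Q}^i\}]$, ranging over all dimensions of the $R_i$ and all such channels. *)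

(* Defs.v *)
From HB Require Import structures.
From mathcomp Require Import all_boot all_order all_algebra.
From mathcomp Require Import mxtens.
Set Implicit Arguments. Unset Strict Implicit. Unset Printing Implicit Defensive.
Import Order.TTheory GRing.Theory Num.Theory.
Local Open Scope ring_scope.

(* Finite-dimensional quantum systems are modelled by matrices over an abstract
   complex field C : numClosedFieldType (e.g. algC or complex R).
   A system of dimension d has operators 'M[C]_d; the composite system X Y of
   dimensions p, q is 'M_(p * q) with the Kronecker (mxtens) index convention
   (i, j) |-> i * q + j. *)

Section Quantum.
Variable C : numClosedFieldType.

Definition adj m n (M : 'M[C]_(m, n)) : 'M[C]_(n, m) := map_mx Num.conj (M^T).

Definition psd n (M : 'M[C]_n) : Prop :=
  forall v : 'cV[C]_n, 0 <= (adj v *m M *m v) 0 0.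

Definition blk k m (M : 'M[C]_(k * m)) (i j : 'I_k) : 'M[C]_m :=
  \matrix_(a, c) M (mxtens_index (i, a)) (mxtens_index (j, c)).

Definition idtens k m p (Phi : 'M[C]_m -> 'M[C]_p) (M : 'M[C]_(k * m)) : 'M[C]_(k * p) :=
  \matrix_(x, y) Phi (blk M (mxtens_unindex x).1 (mxtens_unindex y).1)
                     (mxtens_unindex x).2 (mxtens_unindex y).2.

Definition linear_map m p (Phi : 'M[C]_m -> 'M[C]_p) : Prop :=
  forall (a : C) X Y, Phi (a *: X + Y) = a *: Phi X + Phi Y.

Definition completely_positive m p (Phi : 'M[C]_m -> 'M[C]_p) : Prop :=
  forall k (M : 'M[C]_(k * m)), psd M -> psd (idtens Phi M).

Definition trace_preserving m p (Phi : 'M[C]_m -> 'M[C]_p) : Prop :=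
  forall X, \tr (Phi X) = \tr X.

Definition channel m p (Phi : 'M[C]_m -> 'M[C]_p) : Prop :=
  [/\ linear_map Phi, completely_positive Phi & trace_preserving Phi].

Definition ptrace2 p q (M : 'M[C]_(p * q)) : 'M[C]_p :=
  \matrix_(i, j) \sum_(k < q) M (mxtens_index (i, k)) (mxtens_index (j, k)).

Definition conj_op m n (W : 'M[C]_(m, n)) (X : 'M[C]_n) : 'M[C]_m :=
  W *m X *m adj W.

(* Reordering of tensor factors  b (x) ((B (x) E) (x) R)  -->  (b (x) B) (x) (R (x) E). *)
Definition reorder_idx b dB e r (x : 'I_((b * dB) * (r * e))) : 'I_(b * ((dB * e) * r)) :=
  mxtens_index ((mxtens_unindex (mxtens_unindex x).1).1,
    mxtens_index (mxtens_index ((mxtens_unindex (mxtens_unindex x).1).2,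
                                (mxtens_unindex (mxtens_unindex x).2).2),
                  (mxtens_unindex (mxtens_unindex x).2).1)).

Definition reorder b dB e r (M : 'M[C]_(b * ((dB * e) * r))) : 'M[C]_((b * dB) * (r * e)) :=
  \matrix_(x, y) M (reorder_idx x) (reorder_idx y).

(* Dimension of R_i (R_0 trivial), of E_i (E_0 trivial), and of B_1...B_i. *)
Definition rdim (r : nat -> nat) (i : nat) : nat := if i is 0 then 1%N else r i.
Definition edim (dE : nat) (i : nat) : nat := if i is 0 then 1%N else dE.
Fixpoint bdim (dB : nat) (i : nat) : nat :=
  if i is i'.+1 then (bdim dB i' * dB)%N else 1%N.

Section Run.
Variables (dA dB dE : nat) (W : 'M[C]_(dB * dE, dA)).

(* The state on B_1...B_i (x) (R_i (x) E_i) after i rounds; P i is the (i+1)-th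
   channel, from R_i E_i to A_{i+1} R_{i+1}. *)
Fixpoint run (r : nat -> nat)
  (P : forall i : nat, 'M[C]_(rdim r i * edim dE i) -> 'M[C]_(dA * rdim r i.+1))
  (i : nat) : 'M[C]_(bdim dB i * (rdim r i * edim dE i)) :=
  match i return 'M[C]_(bdim dB i * (rdim r i * edim dE i)) with
  | 0 => 1%:M
  | i'.+1 =>
      reorder (conj_op (1%:M *t (W *t 1%:M)) (idtens (P i') (run P i')))
  end.

Definition out_state (r : nat -> nat)
  (P : forall i : nat, 'M[C]_(rdim r i * edim dE i) -> 'M[C]_(dA * rdim r i.+1))
  (n : nat) : 'M[C]_(bdim dB n) := ptrace2 (run P n).

(* The set of all out_state over all dimensions of R_1, R_2, ... and all
   channels P^1..P^n (only the first n channels are used). With W = U this is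
   A_n; with W = V it is B_n. *)
Definition out_set (n : nat) (X : 'M[C]_(bdim dB n)) : Prop :=
  exists (r : nat -> nat)
    (P : forall i : nat, 'M[C]_(rdim r i * edim dE i) -> 'M[C]_(dA * rdim r i.+1)),
    (forall i, (i < n)%N -> channel (P i)) /\ X = out_state P n.
End Run.

Definition convex_mxset d (S : 'M[C]_d -> Prop) : Prop :=
  forall X Y (p : C), S X -> S Y -> 0 <= p <= 1 -> S (p *: X + (1 - p) *: Y).

End Quantum.
Arguments out_set {C dA dB dE} W n X.

(* Main.v *)
Require Import Defs.
From HB Require Import structures.
From mathcomp Require Import all_boot all_order all_algebra.
From mathcomp Require Import mxtens.
Import Order.TTheory GRing.Theory Num.Theory.
Local Open Scope ring_scope.

Set Implicit Arguments. Unset Strict Implicit. Unset Printing Implicit Defensive.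

Section Aux.
Variable C : numClosedFieldType.

Definition selmx m n (f : 'I_m -> 'I_n) : 'M[C]_(m, n) :=
  \matrix_(i, j) ((j == f i)%:R).

Definition tmap m n m' n' (f : 'I_m -> 'I_m') (g : 'I_n -> 'I_n') (x : 'I_(m * n))
  : 'I_(m' * n') :=
  mxtens_index (f (mxtens_unindex x).1, g (mxtens_unindex x).2).

Lemma tmapE m n m' n' (f : 'I_m -> 'I_m') (g : 'I_n -> 'I_n') i j :
  tmap f g (mxtens_index (i, j)) = mxtens_index (f i, g j).
Proof. by rewrite /tmap mxtens_indexK. Qed.

Lemma sum_tens m n (F : 'I_(m * n) -> C) :
  \sum_(k < m * n) F k = \sum_(i < m) \sum_(j < n) F (mxtens_index (i, j)).
Proof.
rewrite pair_big /=.
rewrite (reindex (@mxtens_index m n)) /=; last first.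
  by exists (@mxtens_unindex m n) => x _; rewrite (mxtens_indexK, mxtens_unindexK).
by apply: eq_bigr => -[i j] _.
Qed.

Lemma sum_deltal n (i : 'I_n) (F : 'I_n -> C) :
  \sum_(j < n) ((i == j)%:R * F j) = F i.
Proof.
rewrite (bigD1 i) //= eqxx mul1r big1 ?addr0 // => j /negbTE.
by rewrite eq_sym => ->; rewrite mul0r.
Qed.

Lemma sum_deltar n (i : 'I_n) (F : 'I_n -> C) :
  \sum_(j < n) (F j * (j == i)%:R) = F i.
Proof.
rewrite (bigD1 i) //= eqxx mulr1 big1 ?addr0 // => j /negbTE ->.
by rewrite mulr0.
Qed.

Lemma selmx_mul m n p (f : 'I_m -> 'I_n) (M : 'M[C]_(n, p)) :
  selmx f *m M = \matrix_(i, j) M (f i) j.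
Proof.
apply/matrixP => i j; rewrite !mxE.
rewrite -(sum_deltal (f i) (fun k => M k j)).
by apply: eq_bigr => k _; rewrite mxE eq_sym.
Qed.

Lemma adj_selE m n (f : 'I_m -> 'I_n) i j :
  adj (selmx f) i j = (i == f j)%:R.
Proof. by rewrite !mxE conjC_nat. Qed.

Lemma mul_adjsel m n p (f : 'I_p -> 'I_n) (M : 'M[C]_(m, n)) :
  M *m adj (selmx f) = \matrix_(i, j) M i (f j).
Proof.
apply/matrixP => i j; rewrite !mxE.
rewrite -(sum_deltar (f j) (fun k => M i k)).
by apply: eq_bigr => k _; rewrite adj_selE.
Qed.

Lemma conj_sel m n (f : 'I_m -> 'I_n) (M : 'M[C]_n) :
  conj_op (selmx f) M = \matrix_(i, j) M (f i) (f j).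
Proof.
rewrite /conj_op selmx_mul mul_adjsel.
by apply/matrixP => i j; rewrite !mxE.
Qed.

Lemma eq_selmx m n (f g : 'I_m -> 'I_n) : f =1 g -> selmx f = selmx g.
Proof. by move=> fg; apply/matrixP => i j; rewrite !mxE fg. Qed.

Lemma selmx_comp m n p (f : 'I_m -> 'I_n) (g : 'I_n -> 'I_p) :
  selmx f *m selmx g = selmx (fun x => g (f x)).
Proof. by rewrite selmx_mul; apply/matrixP => i j; rewrite !mxE. Qed.

Lemma one_sel n : (1%:M : 'M[C]_n) = selmx id.
Proof. by apply/matrixP => i j; rewrite !mxE eq_sym. Qed.

Lemma tens_sel m n m' n' (f : 'I_m -> 'I_m') (g : 'I_n -> 'I_n') :
  selmx f *t selmx g = selmx (tmap f g).
Proof.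
apply/matrixP => x y.
case: (mxtens_indexP x) => i j; case: (mxtens_indexP y) => k l.
rewrite tensmxE !mxE tmapE -natrM mulnb.
by rewrite (inj_eq (can_inj (@mxtens_indexK _ _))) xpair_eqE.
Qed.

Lemma sel_adj_sel m n p (f : 'I_m -> 'I_n) (g : 'I_p -> 'I_n) :
  selmx f *m adj (selmx g) = \matrix_(i, j) ((g j == f i)%:R).
Proof. by rewrite mul_adjsel; apply/matrixP => i j; rewrite !mxE. Qed.

Lemma hadj_mul m n p (A : 'M[C]_(m, n)) (B : 'M[C]_(n, p)) :
  adj (A *m B) = adj B *m adj A.
Proof.
apply/matrixP => i j; rewrite !mxE rmorph_sum; apply: eq_bigr => k _.
by rewrite !mxE rmorphM mulrC.
Qed.

Lemma hadjK m n (A : 'M[C]_(m, n)) : adj (adj A) = A.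
Proof. by apply/matrixP => i j; rewrite !mxE conjCK. Qed.

Lemma hadj_tens m n p q (A : 'M[C]_(m, n)) (B : 'M[C]_(p, q)) :
  adj (A *t B) = adj A *t adj B.
Proof. by apply/matrixP => i j; rewrite !mxE rmorphM. Qed.

Lemma hadj1 n : adj (1%:M : 'M[C]_n) = 1%:M.
Proof. by apply/matrixP => i j; rewrite !mxE conjC_nat eq_sym. Qed.

Lemma tens11 m n : (1%:M : 'M[C]_m) *t (1%:M : 'M[C]_n) = 1%:M.
Proof.
rewrite !one_sel tens_sel; apply: eq_selmx => x.
by case: (mxtens_indexP x) => i j; rewrite tmapE.
Qed.

Lemma conj_opM m n p (A : 'M[C]_(m, n)) (B : 'M[C]_(n, p)) X :
  conj_op A (conj_op B X) = conj_op (A *m B) X.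
Proof. by rewrite /conj_op hadj_mul !mulmxA. Qed.

Lemma conj_opL m n (A : 'M[C]_(m, n)) (a : C) X Y :
  conj_op A (a *: X + Y) = a *: conj_op A X + conj_op A Y.
Proof. by rewrite /conj_op mulmxDr mulmxDl -!scalemxAr -scalemxAl. Qed.

Lemma conj_opZ m n (A : 'M[C]_(m, n)) (a : C) X :
  conj_op A (a *: X) = a *: conj_op A X.
Proof. by rewrite /conj_op -!scalemxAr -scalemxAl. Qed.

Lemma conj_opD m n (A : 'M[C]_(m, n)) X Y :
  conj_op A (X + Y) = conj_op A X + conj_op A Y.
Proof. by rewrite /conj_op mulmxDr mulmxDl. Qed.

Lemma conj_op0 m n X : conj_op (0 : 'M[C]_(m, n)) X = 0.
Proof. by rewrite /conj_op mul0mx mul0mx. Qed.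

End Aux.
Arguments selmx {C m n} f.
Set Implicit Arguments. Unset Strict Implicit. Unset Printing Implicit Defensive.

Section Aux2.
Variable C : numClosedFieldType.

Lemma sum_deltal2 n (i : 'I_n) (F : 'I_n -> C) :
  \sum_(j < n) ((j == i)%:R * F j) = F i.
Proof.
rewrite -(sum_deltal i F); apply: eq_bigr => j _; by rewrite eq_sym.
Qed.

Lemma idtensE k m p (Phi : 'M[C]_m -> 'M[C]_p) (M : 'M[C]_(k * m)) i a j c :
  idtens Phi M (mxtens_index (i, a)) (mxtens_index (j, c)) = Phi (blk M i j) a c.
Proof. by rewrite mxE !mxtens_indexK. Qed.

Lemma blkE k m (M : 'M[C]_(k * m)) i j a c :
  blk M i j a c = M (mxtens_index (i, a)) (mxtens_index (j, c)).
Proof. by rewrite mxE. Qed.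

Lemma tens1_mulE k m n l (Q : 'M[C]_(m, n)) (M : 'M[C]_(k * n, l)) i a y :
  ((1%:M *t Q) *m M) (mxtens_index (i, a)) y
  = \sum_(u < n) Q a u * M (mxtens_index (i, u)) y.
Proof.
rewrite mxE sum_tens.
rewrite (eq_bigr (fun i' => (i' == i)%:R *
   \sum_(u < n) Q a u * M (mxtens_index (i, u)) y)).
  by rewrite sum_deltal2.
move=> i' _; rewrite mulr_sumr; apply: eq_bigr => u _.
rewrite tensmxE mxE eq_sym; case: eqP => [->|_]; first by rewrite ?eqxx !mul1r.
by rewrite !mul0r.
Qed.

Lemma mul_tens1E k m n l (Q : 'M[C]_(m, n)) (M : 'M[C]_(l, k * m)) x j c :
  (M *m (1%:M *t Q)) x (mxtens_index (j, c))
  = \sum_(v < m) M x (mxtens_index (j, v)) * Q v c.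
Proof.
rewrite mxE sum_tens.
rewrite (eq_bigr (fun j' => (j' == j)%:R *
   \sum_(v < m) M x (mxtens_index (j, v)) * Q v c)).
  by rewrite sum_deltal2.
move=> j' _; rewrite mulr_sumr; apply: eq_bigr => v _.
rewrite tensmxE mxE; case: eqP => [->|_]; first by rewrite !mul1r.
by rewrite !mul0r mulr0.
Qed.

Lemma idtens_conj k m n (Q : 'M[C]_(m, n)) (M : 'M[C]_(k * n)) :
  idtens (conj_op Q) M = conj_op (1%:M *t Q) M.
Proof.
apply/matrixP => x y.
case: (mxtens_indexP x) => i a; case: (mxtens_indexP y) => j c.
rewrite idtensE /conj_op hadj_tens hadj1 mul_tens1E mxE.
apply: eq_bigr => v _; congr (_ * _).
rewrite tens1_mulE mxE; apply: eq_bigr => u _.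
by rewrite blkE.
Qed.

Lemma blk_idtens k m p (g : 'M[C]_m -> 'M[C]_p) (M : 'M[C]_(k * m)) i j :
  blk (idtens g M) i j = g (blk M i j).
Proof. by apply/matrixP => a c; rewrite blkE idtensE. Qed.

Lemma idtens_comp k m p q (f : 'M[C]_p -> 'M[C]_q) (g : 'M[C]_m -> 'M[C]_p)
  (M : 'M[C]_(k * m)) :
  idtens f (idtens g M) = idtens (fun X => f (g X)) M.
Proof. by apply/matrixP => x y; rewrite !mxE blk_idtens. Qed.

Lemma idtens_add k m p (f g : 'M[C]_m -> 'M[C]_p) (M : 'M[C]_(k * m)) :
  idtens (fun X => f X + g X) M = idtens f M + idtens g M.
Proof. by apply/matrixP => x y; rewrite !mxE. Qed.

Lemma idtens_scal k m p (a : C) (f : 'M[C]_m -> 'M[C]_p) (M : 'M[C]_(k * m)) :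
  idtens (fun X => a *: f X) M = a *: idtens f M.
Proof. by apply/matrixP => x y; rewrite !mxE. Qed.

Lemma idtens_id k m (M : 'M[C]_(k * m)) : idtens (fun X => X) M = M.
Proof.
apply/matrixP => x y.
case: (mxtens_indexP x) => i a; case: (mxtens_indexP y) => j c.
by rewrite idtensE blkE.
Qed.

Lemma idtens_ext k m p (f g : 'M[C]_m -> 'M[C]_p) (M : 'M[C]_(k * m)) :
  f =1 g -> idtens f M = idtens g M.
Proof. by move=> fg; apply/matrixP => x y; rewrite !mxE fg. Qed.

Lemma qlinear0 m p (f : 'M[C]_m -> 'M[C]_p) : linear_map f -> f 0 = 0.
Proof.
move=> lf; have := lf (-1) 0 0.
by rewrite !scaleN1r !oppr0 !addr0 addNr.
Qed.

Lemma qlinearZ m p (f : 'M[C]_m -> 'M[C]_p) a X : linear_map f -> f (a *: X) = a *: f X.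
Proof. by move=> lf; rewrite -[a *: X]addr0 lf qlinear0 // addr0. Qed.

Lemma blkZ k m (a : C) (M : 'M[C]_(k * m)) i j : blk (a *: M) i j = a *: blk M i j.
Proof. by apply/matrixP => u v; rewrite !mxE. Qed.

Lemma idtens_linZ k m p (f : 'M[C]_m -> 'M[C]_p) (a : C) (M : 'M[C]_(k * m)) :
  linear_map f -> idtens f (a *: M) = a *: idtens f M.
Proof.
move=> lf; apply/matrixP => x y; rewrite !mxE blkZ qlinearZ //.
by rewrite mxE.
Qed.

Lemma psd_conj m n (Q : 'M[C]_(m, n)) (M : 'M[C]_n) : psd M -> psd (conj_op Q M).
Proof.
move=> hM v; have := hM (adj Q *m v).
by rewrite /conj_op hadj_mul hadjK !mulmxA.
Qed.

Lemma psd_add n (M N : 'M[C]_n) : psd M -> psd N -> psd (M + N).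
Proof.
move=> hM hN v; rewrite mulmxDr mulmxDl mxE.
exact: addr_ge0.
Qed.

Lemma psd_scale n (a : C) (M : 'M[C]_n) : 0 <= a -> psd M -> psd (a *: M).
Proof.
move=> ha hM v; rewrite -scalemxAr -scalemxAl mxE.
exact: mulr_ge0.
Qed.

Lemma cp_conj m n (Q : 'M[C]_(m, n)) : completely_positive (conj_op Q).
Proof. by move=> k M hM; rewrite idtens_conj; apply: psd_conj. Qed.

Lemma ptrace2Z p q (a : C) (M : 'M[C]_(p * q)) : ptrace2 (a *: M) = a *: ptrace2 M.
Proof.
apply/matrixP => i j; rewrite !mxE mulr_sumr; apply: eq_bigr => k _.
by rewrite mxE.
Qed.

Lemma ptrace2D p q (M N : 'M[C]_(p * q)) : ptrace2 (M + N) = ptrace2 M + ptrace2 N.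
Proof.
apply/matrixP => i j; rewrite !mxE -big_split; apply: eq_bigr => k _.
by rewrite mxE.
Qed.

End Aux2.
Set Implicit Arguments. Unset Strict Implicit. Unset Printing Implicit Defensive.

Section Aux3.
Variable C : numClosedFieldType.

Lemma reorder_conj b dB e r (M : 'M[C]_(b * ((dB * e) * r))) :
  reorder M = conj_op (selmx (@reorder_idx b dB e r)) M.
Proof. by rewrite conj_sel. Qed.

Lemma perm_comm b dB e r s (f : 'I_r -> 'I_s) :
  ((1%:M : 'M[C]_(b * dB)) *t (selmx f *t (1%:M : 'M[C]_e)))
    *m selmx (@reorder_idx b dB e s)
  = selmx (@reorder_idx b dB e r)
    *m ((1%:M : 'M[C]_b) *t ((1%:M : 'M[C]_(dB * e)) *t selmx f)).
Proof.
rewrite !one_sel !tens_sel !selmx_comp; apply: eq_selmx => x.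
case: (mxtens_indexP x) => y z.
case: (mxtens_indexP y) => be B; case: (mxtens_indexP z) => rho eps.
rewrite (tmapE id (tmap f id)) /reorder_idx !mxtens_indexK /=.
by rewrite /tmap !mxtens_indexK.
Qed.

Lemma mainM b dB e dA r s (W : 'M[C]_(dB * e, dA)) (f : 'I_r -> 'I_s) t (g : 'I_t -> 'I_s) :
  ((1%:M : 'M[C]_(b * dB)) *t (selmx f *t (1%:M : 'M[C]_e)))
    *m selmx (@reorder_idx b dB e s)
    *m ((1%:M : 'M[C]_b) *t (W *t (1%:M : 'M[C]_s)))
    *m ((1%:M : 'M[C]_b) *t adj ((1%:M : 'M[C]_dA) *t selmx g))
  = selmx (@reorder_idx b dB e r) *m ((1%:M : 'M[C]_b) *t (W *t (1%:M : 'M[C]_r)))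
    *m ((1%:M : 'M[C]_b) *t ((1%:M : 'M[C]_dA) *t (selmx f *m adj (selmx g)))).
Proof.
rewrite perm_comm -!mulmxA; congr (_ *m _).
rewrite hadj_tens hadj1 !tensmx_mul.
by rewrite !mulmx1 !mul1mx.
Qed.

Lemma sel_adj_inj m n (f : 'I_m -> 'I_n) :
  injective f -> selmx f *m adj (selmx f) = 1%:M :> 'M[C]_m.
Proof.
move=> fi; rewrite sel_adj_sel; apply/matrixP => i j; rewrite !mxE.
by rewrite (inj_eq fi) eq_sym.
Qed.

Lemma sel_adj_lr m n :
  selmx (@lshift m n) *m adj (selmx (@rshift m n)) = 0 :> 'M[C]_(m, n).
Proof. by rewrite sel_adj_sel; apply/matrixP => i j; rewrite !mxE eq_rlshift. Qed.

Lemma sel_adj_rl m n :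
  selmx (@rshift m n) *m adj (selmx (@lshift m n)) = 0 :> 'M[C]_(n, m).
Proof. by rewrite sel_adj_sel; apply/matrixP => i j; rewrite !mxE eq_lrshift. Qed.

Lemma split_sum r r' e (F : 'I_((r + r') * e) -> C) :
  \sum_k F k = \sum_(k < r * e) F (tmap (@lshift r r') id k)
             + \sum_(k < r' * e) F (tmap (@rshift r r') id k).
Proof.
rewrite !sum_tens sumr_add; congr (_ + _); apply: eq_bigr => i _;
  apply: eq_bigr => j _; by rewrite tmapE.
Qed.

Lemma trace_split r r' e (X : 'M[C]_((r + r') * e)) :
  \tr (conj_op (selmx (@lshift r r') *t (1%:M : 'M_e)) X)
  + \tr (conj_op (selmx (@rshift r r') *t (1%:M : 'M_e)) X) = \tr X.
Proof.
rewrite !one_sel !tens_sel !conj_sel /mxtrace (split_sum (fun k => X k k)).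
by congr (_ + _); apply: eq_bigr => k _; rewrite mxE.
Qed.

Lemma ptrace_split b r r' e (M : 'M[C]_(b * ((r + r') * e))) :
  ptrace2 M =
  ptrace2 (conj_op ((1%:M : 'M_b) *t (selmx (@lshift r r') *t (1%:M : 'M_e))) M)
  + ptrace2 (conj_op ((1%:M : 'M_b) *t (selmx (@rshift r r') *t (1%:M : 'M_e))) M).
Proof.
rewrite !one_sel !tens_sel !conj_sel; apply/matrixP => i j; rewrite !mxE.
rewrite (split_sum (fun k => M (mxtens_index (i, k)) (mxtens_index (j, k)))).
by congr (_ + _); apply: eq_bigr => k _; rewrite mxE !tmapE.
Qed.

Lemma trace_Jm dA m n (f : 'I_m -> 'I_n) (Y : 'M[C]_(dA * m)) :
  injective f ->
  \tr (conj_op (adj ((1%:M : 'M_dA) *t selmx f)) Y) = \tr Y.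
Proof.
move=> fi; rewrite /conj_op hadjK mxtrace_mulC mulmxA.
rewrite hadj_tens hadj1 tensmx_mul mul1mx sel_adj_inj // tens11 mul1mx //.
Qed.

Lemma run_S dA dB dE (W : 'M[C]_(dB * dE, dA)) r
  (Q : forall i : nat, 'M[C]_(rdim r i * edim dE i) -> 'M[C]_(dA * rdim r i.+1)) i :
  run W Q i.+1 = conj_op (selmx (@reorder_idx (bdim dB i) dB dE (rdim r i.+1))
                          *m (1%:M *t (W *t 1%:M))) (idtens (Q i) (run W Q i)).
Proof. by rewrite [LHS]/= reorder_conj conj_opM. Qed.

Lemma idtens_scale_id k m (a : C) (M : 'M[C]_(k * m)) :
  idtens (fun X => a *: X) M = a *: M.
Proof. have := idtens_scal a (fun X => X) M; rewrite idtens_id; exact. Qed.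

End Aux3.
Unset Implicit Arguments.

Section Mix.
Variables (C : numClosedFieldType) (dA dB dE : nat) (W : 'M[C]_(dB * dE, dA)).
Variables (r r' : nat -> nat).
Variable P : forall i, 'M[C]_(rdim r i * edim dE i) -> 'M[C]_(dA * rdim r i.+1).
Variable P' : forall i, 'M[C]_(rdim r' i * edim dE i) -> 'M[C]_(dA * rdim r' i.+1).
Variable p : C.

Definition rr i := (r i + r' i)%N.

Definition Lm i : 'M[C]_(rdim rr i * edim dE i) -> 'M[C]_(rdim r i * edim dE i) :=
  match i as i0 return 'M[C]_(rdim rr i0 * edim dE i0) -> 'M[C]_(rdim r i0 * edim dE i0) with
  | 0 => fun X => p *: X
  | j.+1 => conj_op (selmx (@lshift (r j.+1) (r' j.+1)) *t (1%:M : 'M[C]_dE))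
  end.

Definition Rm i : 'M[C]_(rdim rr i * edim dE i) -> 'M[C]_(rdim r' i * edim dE i) :=
  match i as i0 return 'M[C]_(rdim rr i0 * edim dE i0) -> 'M[C]_(rdim r' i0 * edim dE i0) with
  | 0 => fun X => (1 - p) *: X
  | j.+1 => conj_op (selmx (@rshift (r j.+1) (r' j.+1)) *t (1%:M : 'M[C]_dE))
  end.

Definition Jm i : 'M[C]_(dA * rdim r i.+1) -> 'M[C]_(dA * rdim rr i.+1) :=
  conj_op (adj ((1%:M : 'M[C]_dA) *t selmx (@lshift (r i.+1) (r' i.+1)))).

Definition Km i : 'M[C]_(dA * rdim r' i.+1) -> 'M[C]_(dA * rdim rr i.+1) :=
  conj_op (adj ((1%:M : 'M[C]_dA) *t selmx (@rshift (r i.+1) (r' i.+1)))).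

Definition PP i (X : 'M[C]_(rdim rr i * edim dE i)) : 'M[C]_(dA * rdim rr i.+1) :=
  Jm i (P i (Lm i X)) + Km i (P' i (Rm i X)).

Hypothesis hp : 0 <= p <= 1.

Lemma Lm_lin i : linear_map (Lm i).
Proof.
case: i => [|j] a X Y /=; last exact: conj_opL.
by rewrite scalerDr !scalerA mulrC.
Qed.

Lemma Rm_lin i : linear_map (Rm i).
Proof.
case: i => [|j] a X Y /=; last exact: conj_opL.
by rewrite scalerDr !scalerA mulrC.
Qed.

Lemma Lm_cp i : completely_positive (Lm i).
Proof.
case: i => [|j] /=; last exact: cp_conj.
move=> k M hM; rewrite idtens_scale_id; apply: psd_scale => //.
by case/andP: hp.
Qed.

Lemma Rm_cp i : completely_positive (Rm i).
Proof.
case: i => [|j] /=; last exact: cp_conj.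
move=> k M hM; rewrite idtens_scale_id; apply: psd_scale => //.
by case/andP: hp => _; rewrite subr_ge0.
Qed.

Lemma LR_tr i X : \tr (Lm i X) + \tr (Rm i X) = \tr X.
Proof.
case: i X => [|j] X /=; last exact: trace_split.
by rewrite !mxtraceZ -mulrDl addrC subrK mul1r.
Qed.

Lemma PP_channel i : channel (P i) -> channel (P' i) -> channel (PP i).
Proof.
case=> l1 c1 t1 [l2 c2 t2]; split.
- move=> a X Y; rewrite /PP Lm_lin Rm_lin l1 l2 /Jm /Km !conj_opL.
  by rewrite scalerDr addrACA.
- move=> k M hM; rewrite /PP idtens_add.
  rewrite -(idtens_comp (Jm i)) -(idtens_comp (Km i)).
  rewrite -(idtens_comp (P i)) -(idtens_comp (P' i)).
  apply: psd_add; [apply: cp_conj; apply: c1; exact: Lm_cp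
                  |apply: cp_conj; apply: c2; exact: Rm_cp].
- move=> X; rewrite /PP mxtraceD /Jm /Km !trace_Jm ?t1 ?t2 ?LR_tr //.
  + exact: rshift_inj.
  + exact: lshift_inj.
Qed.

Variable n : nat.
Hypothesis hP : forall i, (i < n)%N -> channel (P i).
Hypothesis hP' : forall i, (i < n)%N -> channel (P' i).

Lemma inv i : (i <= n)%N ->
  idtens (Lm i) (run W PP i) = p *: run W P i /\
  idtens (Rm i) (run W PP i) = (1 - p) *: run W P' i.
Proof.
elim: i => [|i IH] hi.
  by split; exact: idtens_scale_id.
have [IH1 IH2] := IH (ltnW hi).
have [l1 _ _] := hP i hi; have [l2 _ _] := hP' i hi.
have E : idtens (PP i) (run W PP i) =
   p *: conj_op (1%:M *t adj ((1%:M : 'M[C]_dA) *t selmx (@lshift (r i.+1) (r' i.+1))))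
          (idtens (P i) (run W P i))
   + (1 - p) *: conj_op (1%:M *t adj ((1%:M : 'M[C]_dA) *t selmx (@rshift (r i.+1) (r' i.+1))))
          (idtens (P' i) (run W P' i)).
  rewrite /PP idtens_add -(idtens_comp (Jm i)) -(idtens_comp (Km i)).
  rewrite -(idtens_comp (P i)) -(idtens_comp (P' i)) IH1 IH2.
  rewrite !idtens_linZ //; try exact: conj_opL. rewrite /Jm /Km. rewrite (idtens_conj (adj ((1%:M : 'M[C]_dA) *t selmx (@lshift (r i.+1) (r' i.+1))))).
  by rewrite (idtens_conj (adj ((1%:M : 'M[C]_dA) *t selmx (@rshift (r i.+1) (r' i.+1))))).
split.
- rewrite run_S (run_S W P) E.
  have LS : forall Z : 'M[C]_(bdim dB i.+1 * (rdim rr i.+1 * edim dE i.+1)),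
    idtens (Lm i.+1) Z = conj_op (1%:M *t (selmx (@lshift (r i.+1) (r' i.+1)) *t (1%:M : 'M[C]_dE))) Z.
    move=> Z; exact: idtens_conj.
  rewrite LS !conj_opD !conj_opZ !conj_opM !mulmxA.
  rewrite mainM sel_adj_inj; last exact: lshift_inj.
  rewrite mainM sel_adj_lr !tensmx0 mulmx0 conj_op0 scaler0 addr0.
  by rewrite !tens11 mulmx1.
- rewrite run_S (run_S W P') E.
  have LS : forall Z : 'M[C]_(bdim dB i.+1 * (rdim rr i.+1 * edim dE i.+1)),
    idtens (Rm i.+1) Z = conj_op (1%:M *t (selmx (@rshift (r i.+1) (r' i.+1)) *t (1%:M : 'M[C]_dE))) Z.
    move=> Z; exact: idtens_conj.
  rewrite LS !conj_opD !conj_opZ !conj_opM !mulmxA.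
  rewrite mainM sel_adj_rl !tensmx0 mulmx0 conj_op0 scaler0 add0r.
  rewrite mainM sel_adj_inj; last exact: rshift_inj.
  by rewrite !tens11 mulmx1.
Qed.

Lemma mix_out : (1 <= n)%N ->
  out_state W PP n = p *: out_state W P n + (1 - p) *: out_state W P' n.
Proof.
case: n inv => [//|m] inv _.
have [I1 I2] := inv m.+1 (leqnn _).
have LS : idtens (Lm m.+1) (run W PP m.+1) = conj_op (1%:M *t (selmx (@lshift (r m.+1) (r' m.+1)) *t (1%:M : 'M[C]_dE))) (run W PP m.+1).
  exact: idtens_conj.
have RS : idtens (Rm m.+1) (run W PP m.+1) = conj_op (1%:M *t (selmx (@rshift (r m.+1) (r' m.+1)) *t (1%:M : 'M[C]_dE))) (run W PP m.+1).
  exact: idtens_conj.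
by rewrite /out_state (ptrace_split (run W PP m.+1)) -LS -RS I1 I2 !ptrace2Z.
Qed.

End Mix.


Lemma convex_out (C : numClosedFieldType) (dA dB dE : nat)
  (W : 'M[C]_(dB * dE, dA)) (n : nat) (hn : (1 <= n)%N) :
  convex_mxset (out_set W n).
Proof.
move=> X Y p [r [P [hP ->]]] [r' [P' [hP' ->]]] hp.
exists (rr r r'), (PP C dA dE r r' P P' p); split.
  by move=> i hi; apply: PP_channel => //; [apply: hP | apply: hP'].
by rewrite (mix_out C dA dB dE W r r' P P' p n hP hP' hn).
Qed.

Theorem lemma4 (C : numClosedFieldType) (dA dB dE : nat)
  (U V : 'M[C]_(dB * dE, dA)) (hU : adj U *m U = 1%:M) (n : nat) (hn : (1 <= n)%N) :
  convex_mxset (out_set U n) /\ convex_mxset (out_set V n).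
Proof. by split; apply: convex_out. Qed.
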